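(* Let $\{a_j\}_{j=-\infty}^{\infty}\in\ell^2$ and $m\in\mathbb{Z}$, $m\neq 0$. Suppose that for each $j$ there is a constant $C_j$ such that $|a_{j+m}|\leq C_j|a_j|$. If, in addition, there is a $J$ such that $|a_{j+m}|\leq|a_j|$ whenever $|j|\geq J$, then $a_j=0$ for all $j$. *)

(* Defs.v *)
From Stdlib Require Import Reals ZArith.
From Coquelicot Require Import Coquelicot.
Open Scope R_scope.

Definition in_l2 (a : Z -> C) : Prop :=
  ex_series (fun n : nat => (Cmod (a (Z.of_nat n)))^2) /\
  ex_series (fun n : nat => (Cmod (a (- Z.of_nat n)%Z))^2).

(* Main.v *)
Require Import Defs.
From Stdlib Require Import Reals ZArith.
From Coquelicot Require Import Coquelicot.
From Stdlib Require Import Lra Lia Psatz.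
Open Scope R_scope.

Lemma tail_small (a : Z -> C) : in_l2 a ->
  forall eps : posreal, exists N : Z, forall z : Z, (N <= Z.abs z)%Z ->
    (Cmod (a z))^2 < eps.
Proof.
  intros [H1 H2] eps.
  apply ex_series_lim_0 in H1. apply ex_series_lim_0 in H2.
  apply is_lim_seq_spec in H1. apply is_lim_seq_spec in H2.
  destruct (H1 eps) as [N1 HN1]. destruct (H2 eps) as [N2 HN2].
  exists (Z.of_nat (Nat.max N1 N2)). intros z Hz.
  destruct (Z_le_gt_dec 0 z) as [Hp|Hn].
  - specialize (HN1 (Z.to_nat z)). rewrite Z2Nat.id in HN1 by lia.
    assert (Hm : (N1 <= Z.to_nat z)%nat) by lia.
    specialize (HN1 Hm). rewrite Rminus_0_r in HN1.
    eapply Rle_lt_trans; [apply Rle_abs|exact HN1].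
  - specialize (HN2 (Z.to_nat (- z))). rewrite Z2Nat.id in HN2 by lia.
    rewrite Z.opp_involutive in HN2.
    assert (Hm : (N2 <= Z.to_nat (-z))%nat) by lia.
    specialize (HN2 Hm). rewrite Rminus_0_r in HN2.
    eapply Rle_lt_trans; [apply Rle_abs|exact HN2].
Qed.

Theorem mainTheorem6 (a : Z -> C) (m : Z) :
  in_l2 a ->
  m <> 0%Z ->
  (forall j : Z, exists Cj : R, Cmod (a (j + m)%Z) <= Cj * Cmod (a j)) ->
  (exists J : Z, forall j : Z, (J <= Z.abs j)%Z -> Cmod (a (j + m)%Z) <= Cmod (a j)) ->
  forall j : Z, a j = 0%C.
Proof.
  intros Hl2 Hm HC [J HJ] j.
  assert (Hfar : forall x : Z, (0 <= x)%Z -> (Z.abs J + Z.abs j <= x)%Z ->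
            (J <= Z.abs (j - x * m))%Z).
  { intros x Hx0 Hx.
    assert (H1 : (Z.abs (x * m) = x * Z.abs m)%Z) by (rewrite Z.abs_mul; lia).
    assert (H2 : (1 <= Z.abs m)%Z) by lia.
    assert (H3 : (x <= x * Z.abs m)%Z) by nia.
    assert (H4 : (Z.abs (x*m) <= Z.abs (j - x*m) + Z.abs j)%Z).
    { lia. }
    lia. }
  set (K := (Z.abs J + Z.abs j)%Z).
  set (j0 := (j - K * m)%Z).
  assert (Hmono : forall k : nat, Cmod (a j0) <= Cmod (a (j0 - Z.of_nat k * m)%Z)).
  { induction k as [|k IH].
    - replace (j0 - Z.of_nat 0 * m)%Z with j0 by lia. lra.
    - eapply Rle_trans; [exact IH|].
      replace (j0 - Z.of_nat k * m)%Z with ((j0 - Z.of_nat (S k) * m) + m)%Z by lia.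
      apply HJ. unfold j0.
      replace (j - K * m - Z.of_nat (S k) * m)%Z with (j - (K + Z.of_nat (S k)) * m)%Z by ring.
      apply Hfar; unfold K; lia. }
  assert (Hz : a j0 = 0%C).
  { apply Cmod_eq_0.
    destruct (Rle_lt_or_eq_dec 0 (Cmod (a j0)) (Cmod_ge_0 _)) as [Hpos|Heq]; [|auto].
    exfalso.
    assert (Hep : 0 < (Cmod (a j0))^2) by (apply pow_lt; exact Hpos).
    destruct (tail_small a Hl2 (mkposreal _ Hep)) as [N HN].
    set (k := Z.to_nat (Z.abs N + Z.abs j0)).
    specialize (Hmono k).
    assert (HNk : (N <= Z.abs (j0 - Z.of_nat k * m))%Z).
    { assert (H1 : (Z.abs (Z.of_nat k * m) = Z.of_nat k * Z.abs m)%Z) by (rewrite Z.abs_mul; lia).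
      assert (H2 : (1 <= Z.abs m)%Z) by lia.
      assert (H3 : (Z.of_nat k <= Z.of_nat k * Z.abs m)%Z) by nia.
      assert (H4 : (Z.abs (Z.of_nat k*m) <= Z.abs (j0 - Z.of_nat k*m) + Z.abs j0)%Z).
      { lia. }
      unfold k in *. lia. }
    specialize (HN _ HNk). simpl in HN.
    assert (0 <= Cmod (a j0)) by apply Cmod_ge_0.
    nra. }
  assert (Hprop : forall k : nat, a (j0 + Z.of_nat k * m)%Z = 0%C).
  { induction k as [|k IH].
    - replace (j0 + Z.of_nat 0 * m)%Z with j0 by lia. exact Hz.
    - apply Cmod_eq_0. destruct (HC (j0 + Z.of_nat k * m)%Z) as [Cj HCj].
      rewrite IH, Cmod_0, Rmult_0_r in HCj.
      replace (j0 + Z.of_nat (S k) * m)%Z with (j0 + Z.of_nat k * m + m)%Z by lia.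
      apply Rle_antisym; [exact HCj| apply Cmod_ge_0]. }
  specialize (Hprop (Z.to_nat K)).
  rewrite Z2Nat.id in Hprop by (unfold K; lia).
  unfold j0 in Hprop. replace (j - K * m + K * m)%Z with j in Hprop by ring.
  exact Hprop.
Qed.
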